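(* Let $p \geq 2$ be an integer and let $U_p=\bigcup_{n\in 2\mathbb Z_+}\mathbb Z_p^n$. Let $\boldsymbol a,\boldsymbol b\in U_p$ be equivalent (in the sense defined in the context). Then $\tau_p(\boldsymbol a)=\tau_p(\boldsymbol b)$.
   Context: $\mathbb Z_+$ denotes the positive integers and $\mathbb Z_p=\mathbb Z/p\mathbb Z$. Two elements of $U_p$ are called equivalent if they are related by a finite sequence of the following transformations of $(a_1,\ldots,a_n)\in\mathbb Z_p^n$ ($n$ even): (Op1) $(a_1,\ldots,a_n)\to(a_2,\ldots,a_n,a_1)$; (Op2) $(a_1,\ldots,a_n)\to(a, a_2+(-1)^2(a_1-a),\ldots,a_i+(-1)^i(a_1-a),\ldots,a_n+(-1)^n(a_1-a))$ for any $a\in\mathbb Z_p$; (Op3) $(a_1,\ldots,a_n)\to(a, a_1-a_2+a,\ldots,a_1-a_i+a,\ldots,a_1-a_n+a)$ for any $a\in\mathbb Z_p$; (Op4) $(a_1,\ldots,a_n)\to(a_1,-a_1+a_2+a_3,a_3,\ldots,a_n)$ when $n>3$. For $\boldsymbol a=(a_1,\ldots,a_n)\in U_p$, $\tau_p(\boldsymbol a)$ is the maximum of all $k\in\{1,\ldots,p\}$ such that $k\mid p$ and $a_1+a_2\equiv a_2+a_3\equiv\cdots\equiv a_{n-1}+a_n\equiv a_n+a_1 \pmod k$ (congruence mod $k$ is well defined on $\mathbb Z_p$ since $k\mid p$). *)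

(* Defs.v *)
From mathcomp Require Import all_boot all_order all_algebra.
From Stdlib Require Import Relations.
Set Implicit Arguments. Unset Strict Implicit. Unset Printing Implicit Defensive.
Import GRing.Theory.
Local Open Scope ring_scope.

(* U_p : tuples over Z_p of even positive length, represented as sequences.
   Sequences are 0-indexed: a`_j is a_{j+1} of the paper. *)
Definition inU (p : nat) (a : seq 'Z_p) : bool :=
  (0 < size a)%N && ~~ odd (size a).

Definition op1 (p : nat) (a : seq 'Z_p) : seq 'Z_p := rot 1 a.

Definition op2 (p : nat) (x : 'Z_p) (a : seq 'Z_p) : seq 'Z_p :=
  mkseq (fun j => a`_j + (-1) ^+ j.+1 * (a`_0 - x)) (size a).

Definition op3 (p : nat) (x : 'Z_p) (a : seq 'Z_p) : seq 'Z_p :=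
  mkseq (fun j => a`_0 - a`_j + x) (size a).

Definition op4 (p : nat) (a : seq 'Z_p) : seq 'Z_p :=
  set_nth 0 a 1 (- a`_0 + a`_1 + a`_2).

Inductive op_step (p : nat) : seq 'Z_p -> seq 'Z_p -> Prop :=
| step1 a : op_step (a) (op1 a)
| step2 x a : op_step a (op2 x a)
| step3 x a : op_step a (op3 x a)
| step4 a : (3 < size a)%N -> op_step a (op4 a).

Definition equivU (p : nat) (a b : seq 'Z_p) : Prop :=
  clos_refl_sym_trans (seq 'Z_p) (@op_step p) a b.

Definition congr_mod (p k : nat) (x y : 'Z_p) : bool :=
  ((val x) %% k == (val y) %% k)%N.

Definition consec_congr (p k : nat) (a : seq 'Z_p) : bool :=
  let n := size a in
  all (fun j => congr_mod k (a`_j + a`_((j.+1) %% n)) (a`_0 + a`_(1 %% n)))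
      (iota 0 n).

Definition tau (p : nat) (a : seq 'Z_p) : nat :=
  \max_(k < p.+1 | (0 < k)%N && (k %| p)%N && consec_congr k a) k.

(* Main.v *)
Require Import Defs.
From mathcomp Require Import all_boot all_order all_algebra.
From mathcomp Require Import ring.
From Stdlib Require Import Relations.
Set Implicit Arguments. Unset Strict Implicit. Unset Printing Implicit Defensive.
Import GRing.Theory.
Local Open Scope ring_scope.

Lemma cm_refl p k (x : 'Z_p) : congr_mod k x x.
Proof. by rewrite /congr_mod. Qed.

Lemma cm_sym p k (x y : 'Z_p) : congr_mod k x y -> congr_mod k y x.
Proof. by rewrite /congr_mod eq_sym. Qed.

Lemma cm_trans p k (x y z : 'Z_p) :
  congr_mod k x y -> congr_mod k y z -> congr_mod k x z.
Proof. by rewrite /congr_mod => /eqP -> /eqP ->. Qed.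

Lemma cm_add p k (hp : (1 < p)%N) (hk : (k %| p)%N) (x x' y y' : 'Z_p) :
  congr_mod k x x' -> congr_mod k y y' -> congr_mod k (x + y) (x' + y').
Proof.
rewrite /congr_mod /= => h1 h2.
have hk' : (k %| (Zp_trunc p).+2)%N by rewrite (Zp_cast hp).
rewrite !modn_dvdm // -modnDm (eqP h1) (eqP h2) modnDm.
done.
Qed.

Lemma cm_opp p k (hp : (1 < p)%N) (hk : (k %| p)%N) (x y : 'Z_p) :
  congr_mod k x y -> congr_mod k (-x) (-y).
Proof.
move=> h.
have h1 := cm_add hp hk (cm_refl k (-x)) h.
rewrite addNr in h1.
have h2 := cm_add hp hk h1 (cm_refl k (-y)).
rewrite add0r addrK in h2.
exact: cm_sym.
Qed.

Lemma cm_eqL p k (x x' y : 'Z_p) : x = x' -> congr_mod k x y = congr_mod k x' y.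
Proof. by move=> ->. Qed.

Definition ss p (a : seq 'Z_p) j := a`_j + a`_(j.+1 %% size a).

Lemma CP p k (a : seq 'Z_p) :
  reflect (forall j, (j < size a)%N -> congr_mod k (ss a j) (ss a 0))
          (consec_congr k a).
Proof.
apply: (iffP allP) => H j.
  by move=> hj; apply: H; rewrite mem_iota add0n.
by rewrite mem_iota add0n => /andP[_ hj]; apply: H.
Qed.

Lemma nth_rot1 p (a : seq 'Z_p) i : (i < size a)%N ->
  (rot 1 a)`_i = a`_(i.+1 %% size a).
Proof.
case: a => [|x s] //= hi.
rewrite rot1_cons nth_rcons.
case: (ltngtP i (size s)) => h.
- by rewrite modn_small.
- by move: hi; rewrite ltnS leqNgt h.
- by rewrite h modnn.
Qed.

Lemma ss_rot1 p (a : seq 'Z_p) j : (j < size a)%N ->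
  ss (rot 1 a) j = ss a (j.+1 %% size a).
Proof.
move=> hj; rewrite /ss size_rot.
have hn : (0 < size a)%N by apply: leq_ltn_trans hj.
rewrite !nth_rot1 ?ltn_pmod //.
Qed.

Lemma op1_ok p k (a : seq 'Z_p) : (0 < size a)%N ->
  consec_congr k (op1 a) = consec_congr k a.
Proof.
move=> hn; rewrite /op1.
apply/CP/CP; rewrite size_rot => H j hj.
- set i := ((j + (size a).-1) %% size a)%N.
  have hi : (i < size a)%N by rewrite ltn_pmod.
  have e : (i.+1 %% size a)%N = j.
    rewrite /i -addn1 modnDml -addnA addn1 prednK // -modnDmr modnn addn0.
    by rewrite modn_small.
  have hm : ((size a).-1 < size a)%N by rewrite prednK.
  have e0 : (((size a).-1).+1 %% size a)%N = 0%N by rewrite prednK // modnn.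
  have h1 := H i hi. have h0 := H _ hm.
  rewrite !ss_rot1 // e in h1. rewrite !ss_rot1 // e0 in h0.
  exact: cm_trans h1 (cm_sym h0).
- rewrite !ss_rot1 //.
  apply: cm_trans (H _ _) (cm_sym (H _ _)); by rewrite ltn_pmod.
Qed.

Lemma ss_op2 p (x : 'Z_p) (a : seq 'Z_p) j : ~~ odd (size a) -> (j < size a)%N ->
  ss (op2 x a) j = ss a j.
Proof.
move=> ev hj; rewrite /ss /op2 size_mkseq.
have hn : (0 < size a)%N by apply: leq_ltn_trans hj.
rewrite !nth_mkseq ?ltn_pmod //.
set d := a`_0 - x.
suff hs : (-1) ^+ j.+1 + (-1) ^+ (j.+1 %% size a).+1 = 0 :> 'Z_p.
  transitivity (a`_j + a`_(j.+1 %% size a) + ((-1) ^+ j.+1 + (-1) ^+ (j.+1 %% size a).+1) * d).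
    by rewrite mulrDl addrACA.
  by rewrite hs mul0r addr0.
case: (ltngtP j.+1 (size a)) => h.
- by rewrite modn_small // [X in _ + X]exprS mulN1r addrN.
- by rewrite ltnS leqNgt hj in h.
- rewrite h modnn expr1 -signr_odd (negbTE ev) expr0 addrN //.
Qed.

Lemma op2_ok p k (x : 'Z_p) (a : seq 'Z_p) : (0 < size a)%N -> ~~ odd (size a) ->
  consec_congr k (op2 x a) = consec_congr k a.
Proof.
move=> hn ev.
apply/CP/CP; rewrite /op2 size_mkseq -/(op2 x a) => H j hj.
- by rewrite -(ss_op2 x ev hj) -(ss_op2 x ev hn) H // size_mkseq.
- by rewrite !ss_op2 // H.
Qed.

Lemma ss_op3 p (x : 'Z_p) (a : seq 'Z_p) j : (j < size a)%N ->
  ss (op3 x a) j = (a`_0 + x) + (a`_0 + x) - ss a j.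
Proof.
move=> hj; rewrite /ss /op3 size_mkseq.
have hn : (0 < size a)%N by apply: leq_ltn_trans hj.
rewrite !nth_mkseq ?ltn_pmod //. ring.
Qed.

Lemma cm_cancel p k (hp : (1 < p)%N) (hk : (k %| p)%N) (c u v : 'Z_p) :
  congr_mod k (c - u) (c - v) -> congr_mod k u v.
Proof.
move=> h.
have h1 := cm_opp hp hk (cm_add hp hk (cm_refl k (-c)) h).
by rewrite !addKr !opprK in h1.
Qed.

Lemma op3_ok p k (hp : (1 < p)%N) (hk : (k %| p)%N) (x : 'Z_p) (a : seq 'Z_p) :
  (0 < size a)%N -> consec_congr k (op3 x a) = consec_congr k a.
Proof.
move=> hn.
apply/CP/CP; rewrite /op3 size_mkseq -/(op3 x a) => H j hj.
- have := H j hj; rewrite !ss_op3 //; exact: cm_cancel.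
- rewrite !ss_op3 //. apply: (cm_add hp hk (cm_refl k _)).
  have := cm_opp hp hk (H j hj). by [].
Qed.

Lemma nth_op4 p (a : seq 'Z_p) i :
  (op4 a)`_i = if (i == 1)%N then - a`_0 + a`_1 + a`_2 else a`_i.
Proof. by rewrite /op4 nth_set_nth. Qed.

Lemma size_op4 p (a : seq 'Z_p) : (3 < size a)%N -> size (op4 a) = size a.
Proof. by move=> h; rewrite /op4 size_set_nth; apply/maxn_idPr; apply: ltnW (ltnW h). Qed.

Lemma ssa0 p (a : seq 'Z_p) : (3 < size a)%N -> ss a 0 = a`_0 + a`_1.
Proof. by move=> h; rewrite /ss modn_small //; apply: ltn_trans h. Qed.

Lemma ssa1 p (a : seq 'Z_p) : (3 < size a)%N -> ss a 1 = a`_1 + a`_2.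
Proof. by move=> h; rewrite /ss modn_small //; apply: ltn_trans h. Qed.

Lemma ssb0 p (a : seq 'Z_p) : (3 < size a)%N -> ss (op4 a) 0 = a`_1 + a`_2.
Proof.
move=> h; rewrite /ss size_op4 // modn_small; last by apply: ltn_trans h.
rewrite !nth_op4 /=. ring.
Qed.

Lemma ssb1 p (a : seq 'Z_p) : (3 < size a)%N ->
  ss (op4 a) 1 = (a`_1 + a`_2) + (a`_1 + a`_2) - (a`_0 + a`_1).
Proof.
move=> h; rewrite /ss size_op4 // modn_small; last by apply: ltn_trans h.
rewrite !nth_op4 /=. ring.
Qed.

Lemma ssbj p (a : seq 'Z_p) j : (3 < size a)%N -> (2 <= j)%N -> (j < size a)%N ->
  ss (op4 a) j = ss a j.
Proof.
move=> h hj hjn; rewrite /ss size_op4 // !nth_op4.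
have -> : (j == 1)%N = false by case: j hj {hjn} => [|[|j]].
suff -> : (j.+1 %% size a == 1)%N = false by [].
case: (ltngtP j.+1 (size a)) => e.
- by rewrite modn_small //; case: j hj {hjn e} => [|[|j]].
- by rewrite ltnS leqNgt hjn in e.
- by rewrite e modnn.
Qed.

Lemma op4_ok p k (hp : (1 < p)%N) (hk : (k %| p)%N) (a : seq 'Z_p) :
  (3 < size a)%N -> consec_congr k (op4 a) = consec_congr k a.
Proof.
move=> h.
have h0 : (0 < size a)%N by apply: ltn_trans h.
have h1 : (1 < size a)%N by apply: ltn_trans h.
apply/CP/CP; rewrite size_op4 // => H.
- have H1 := H 1%N h1.
  rewrite ssb0 // ssb1 // in H1.
  have e : congr_mod k (a`_0 + a`_1) (a`_1 + a`_2).
    apply: (cm_cancel hp hk (c := (a`_1 + a`_2) + (a`_1 + a`_2))).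
    by rewrite (_ : _ + _ - (a`_1 + a`_2) = a`_1 + a`_2) //; ring.
  move=> j hj; rewrite ssa0 //.
  case: j hj => [|[|j]] hj.
  - by rewrite ssa0 //; apply: cm_refl.
  - by rewrite ssa1 //; apply: cm_sym.
  - rewrite -ssbj //; apply: cm_trans (H _ hj) _.
    by rewrite ssb0 //; apply: cm_sym.
- have e : congr_mod k (a`_1 + a`_2) (a`_0 + a`_1).
    by rewrite -ssa0 // -ssa1 //; apply: H.
  suff hs : forall j, (j < size a)%N -> congr_mod k (ss (op4 a) j) (a`_0 + a`_1).
    by move=> j hj; apply: cm_trans (hs j hj) (cm_sym (hs 0%N h0)).
  move=> j hj; case: j hj => [|[|j]] hj.
  - by rewrite ssb0.
  - rewrite ssb1 //.
    have := cm_add hp hk (cm_add hp hk e e) (cm_opp hp hk (cm_refl k (a`_0 + a`_1))).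
    by rewrite addrK.
  - by rewrite ssbj // -ssa0 //; apply: H.
Qed.

Lemma step_ok p k (hp : (1 < p)%N) (hk : (k %| p)%N) (a b : seq 'Z_p) :
  op_step a b -> inU a -> consec_congr k a = consec_congr k b /\ inU b.
Proof.
case=> {a b} [a|x a|x a|a h]; rewrite /inU => /andP[hn ev].
- by rewrite op1_ok // /op1 size_rot hn ev.
- by rewrite op2_ok // /op2 size_mkseq hn ev.
- by rewrite op3_ok // /op3 size_mkseq hn ev.
- by rewrite op4_ok // size_op4 // hn ev.
Qed.

Lemma size_step p (a b : seq 'Z_p) : op_step a b -> size b = size a.
Proof.
case=> {a b} [a|x a|x a|a h].
- by rewrite /op1 size_rot.
- by rewrite /op2 size_mkseq.
- by rewrite /op3 size_mkseq.
- by rewrite size_op4.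
Qed.

Lemma equiv_ok p k (hp : (1 < p)%N) (hk : (k %| p)%N) (a b : seq 'Z_p) :
  equivU a b -> inU a -> consec_congr k a = consec_congr k b.
Proof.
have hU : forall a b : seq 'Z_p, op_step a b -> inU a = inU b.
  by move=> a' b' /size_step e; rewrite /inU e.
suff : forall a b : seq 'Z_p, equivU a b -> (inU a = inU b) /\ (inU a -> consec_congr k a = consec_congr k b).
  by move=> S /S [].
move=> {}a {}b; elim=> {a b}.
- move=> a b st; split; first exact: hU.
  by move=> ha; case: (step_ok hp hk st ha).
- by move=> a; split.
- by move=> a b _ [e1 e2]; split => // hb; rewrite e2 // e1.
- move=> a b c _ [e1 e2] _ [e3 e4]; split; first by rewrite e1.
  by move=> ha; rewrite e2 // e4 // -e1.
Qed.

Theorem mainTheorem1 (p : nat) (hp : (2 <= p)%N) (a b : seq 'Z_p) :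
  inU a -> inU b -> equivU a b -> tau a = tau b.
Proof.
move=> ha hb e; rewrite /tau; apply: eq_bigl => k /=.
case: (posnP k) => [->|kp] //=.
case hk: (k %| p)%N => //=.
exact: (equiv_ok hp hk e ha).
Qed.
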